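(* For a morphism $F:\mathcal C\to\mathcal D$ of cylinder categories, the following are equivalent: (1) $F$ is acyclic; (2) $F$ detects weak equivalences (a morphism $v$ of $\mathcal C$ is a weak equivalence iff $F(v)$ is) and for every object $A$ of $\mathcal C$ the morphism $F_A:\mathcal C(A)\to\mathcal D(F(A))$ is homotopy surjective; (3) $hF:h\mathcal C\to h\mathcal D$ is an equivalence of categories; (4) for every object $A$ of $\mathcal C$, $hF_A:h\mathcal C(A)\to h\mathcal D(F(A))$ is an equivalence of categories.
   Context: A cylinder category is a category $\mathcal C$ with two classes of morphisms, the cofibrations and the weak equivalences (morphisms in both classes are called trivial cofibrations), such that: (1) both classes contain all isomorphisms and are closed under composition; (2) weak equivalences satisfy 2-out-of-6: if $f,g,h$ are composable and $f\circ g$, $g\circ h$ are weak equivalences then $f,g,h,f\circ g\circ h$ are; (3) $\mathcal C$ has an initial object $0$ and every $0\to X$ is a cofibration; (4) pushouts of cofibrations along arbitrary maps exist and are cofibrations; (5) pushouts of trivial cofibrations are trivial cofibrations; (6) for every object $X$ the codiagonal $X\sqcup X\to X$ factors as a cofibration $X\sqcup X\hookrightarrow IX$ followed by a weak equivalence $IX\to X$; (7) every trivial cofibration admits a retraction. A morphism of cylinder categories is a functor preserving cofibrations, weak equivalences, the initial object and pushouts along cofibrations. For a cofibration $A\hookrightarrow B$, a relative cylinder object is a factorization $B\sqcup_A B\hookrightarrow I_AB\xrightarrow{\sim}B$ of the codiagonal into a cofibration followed by a weak equivalence. Two maps $f,g:B\to X$ with $f|_A=g|_A$ are homotopic relative to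 $A$, written $f\sim_A g$, if $(f,g):B\sqcup_AB\to X$ extends to $I_AB\to X$ for some relative cylinder object; homotopy $f\sim g$ is the case $A=0$. $h\mathcal C$ denotes the homotopy category: same objects as $\mathcal C$, morphisms the homotopy classes of morphisms (this is a category and is the localization of $\mathcal C$ at weak equivalences). For an object $A$, $\mathcal C(A)$ is the category whose objects are cofibrations $A\hookrightarrow B$ and morphisms commutative triangles under $A$, with cofibrations and weak equivalences those of $\mathcal C$; it is a cylinder category. A morphism $F$ induces a morphism $F_A:\mathcal C(A)\to\mathcal D(F(A))$ and functors $hF$, $hF_A$ on homotopy categories. $F$ is homotopy surjective if for every object $D$ of $\mathcal D$ there is an object $C$ of $\mathcal C$ and a weak equivalence $D\to F(C)$ (equivalently, $hF$ is essentially surjective). $F$ is homotopy fully faithful if for every cofibration $i:A\hookrightarrow B$ in $\mathcal C$, every arrow $x:A\to X$ in $\mathcal C$, and every $v:F(B)\to F(X)$ in $\mathcal D$ with $v\circ F(i)=F(x)$, there is $v':B\to X$ in $\mathcal C$ with $v'\circ i=x$ and $F(v')\sim_{F(A)} v$. $F$ is acyclic if it is both homotopy surjective and homotopy fully faithful. *)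

(* Defs.v *)
From Stdlib Require Import Classical.
Set Implicit Arguments.
Unset Strict Implicit.

Record Cat := {
  Ob :> Type;
  Hom : Ob -> Ob -> Type;
  comp : forall X Y Z, Hom Y Z -> Hom X Y -> Hom X Z;
  idm : forall X, Hom X X;
  comp_assoc : forall W X Y Z (h : Hom W X) (g : Hom X Y) (f : Hom Y Z),
      comp f (comp g h) = comp (comp f g) h;
  comp_id_l : forall X Y (f : Hom X Y), comp (idm Y) f = f;
  comp_id_r : forall X Y (f : Hom X Y), comp f (idm X) = f
}.
Arguments Hom {c} _ _.
Arguments comp {c X Y Z} _ _.
Arguments idm {c} _.

Definition is_iso {C : Cat} {X Y : C} (f : Hom X Y) : Prop :=
  exists g : Hom Y X, comp g f = idm X /\ comp f g = idm Y.

Definition is_pushout {C : Cat} {A B B' P : C} (i : Hom A B) (f : Hom A B')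
    (p1 : Hom B P) (p2 : Hom B' P) : Prop :=
  comp p1 i = comp p2 f /\
  forall (X : C) (h1 : Hom B X) (h2 : Hom B' X), comp h1 i = comp h2 f ->
    exists! h : Hom P X, comp h p1 = h1 /\ comp h p2 = h2.

Definition is_initial {C : Cat} (O : C) : Prop :=
  forall X : C, exists! f : Hom O X, True.

Record CylCat := {
  ccat :> Cat;
  cof : forall X Y : ccat, Hom X Y -> Prop;
  we  : forall X Y : ccat, Hom X Y -> Prop;
  cof_iso : forall X Y (f : Hom X Y), is_iso f -> cof f;
  we_iso : forall X Y (f : Hom X Y), is_iso f -> we f;
  cof_comp : forall X Y Z (g : Hom Y Z) (f : Hom X Y), cof f -> cof g -> cof (comp g f);
  we_comp : forall X Y Z (g : Hom Y Z) (f : Hom X Y), we f -> we g -> we (comp g f);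
  we_2of6 : forall W X Y Z (h : Hom W X) (g : Hom X Y) (f : Hom Y Z),
      we (comp f g) -> we (comp g h) ->
      we f /\ we g /\ we h /\ we (comp f (comp g h));
  zero : ccat;
  init : forall X : ccat, Hom zero X;
  init_unique : forall X (f : Hom zero X), f = init X;
  init_cof : forall X, cof (init X);
  pushout_exists : forall A B B' (i : Hom A B) (f : Hom A B'), cof i ->
      exists (P : ccat) (p1 : Hom B P) (p2 : Hom B' P), is_pushout i f p1 p2;
  pushout_cof : forall A B B' P (i : Hom A B) (f : Hom A B') (p1 : Hom B P)
      (p2 : Hom B' P), cof i -> is_pushout i f p1 p2 -> cof p2;
  pushout_tcof : forall A B B' P (i : Hom A B) (f : Hom A B') (p1 : Hom B P)
      (p2 : Hom B' P), cof i -> we i -> is_pushout i f p1 p2 -> cof p2 /\ we p2;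
  (* (6) cylinder objects: the codiagonal X ⊔ X -> X factors *)
  cylinder : forall X (S : ccat) (i1 i2 : Hom X S),
      is_pushout (init X) (init X) i1 i2 ->
      exists (I : ccat) (c : Hom S I) (p : Hom I X),
        cof c /\ we p /\ comp p (comp c i1) = idm X /\ comp p (comp c i2) = idm X;
  tcof_retract : forall A B (j : Hom A B), cof j -> we j ->
      exists r : Hom B A, comp r j = idm A
}.
Arguments cof {c X Y} _.
Arguments we {c X Y} _.
Arguments zero {c}.
Arguments init {c} _.

(* Homotopy relative to i : A -> B : (f,g) : B ⊔_A B -> X extends to a
   relative cylinder object B ⊔_A B >-> I_A B ~> B. *)
Definition rel_htpy {C : CylCat} {A B X : C} (i : Hom A B) (f g : Hom B X) : Prop :=
  exists (Q : C) (q1 q2 : Hom B Q) (I : C) (c : Hom Q I) (p : Hom I B) (H : Hom I X),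
    is_pushout i i q1 q2 /\ cof c /\ we p /\
    comp p (comp c q1) = idm B /\ comp p (comp c q2) = idm B /\
    comp H (comp c q1) = f /\ comp H (comp c q2) = g.

Definition htpy {C : CylCat} {B X : C} (f g : Hom B X) : Prop :=
  rel_htpy (init B) f g.

Record CylMor (C D : CylCat) := {
  Fo :> C -> D;
  Fh : forall X Y : C, Hom X Y -> Hom (Fo X) (Fo Y);
  F_comp : forall X Y Z (g : Hom Y Z) (f : Hom X Y), Fh (comp g f) = comp (Fh g) (Fh f);
  F_id : forall X, Fh (idm X) = idm (Fo X);
  F_cof : forall X Y (f : Hom X Y), cof f -> cof (Fh f);
  F_we : forall X Y (f : Hom X Y), we f -> we (Fh f);
  F_init : is_initial (Fo zero);
  F_pushout : forall A B B' P (i : Hom A B) (f : Hom A B') (p1 : Hom B P) (p2 : Hom B' P),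
      cof i -> is_pushout i f p1 p2 -> is_pushout (Fh i) (Fh f) (Fh p1) (Fh p2)
}.
Arguments Fh {C D} c {X Y} _.

Definition homotopy_surjective {C D : CylCat} (F : CylMor C D) : Prop :=
  forall Dd : D, exists (Cc : C) (w : Hom Dd (F Cc)), we w.

Definition homotopy_fully_faithful {C D : CylCat} (F : CylMor C D) : Prop :=
  forall (A B X : C) (i : Hom A B) (x : Hom A X) (v : Hom (F B) (F X)),
    cof i -> comp v (Fh F i) = Fh F x ->
    exists v' : Hom B X, comp v' i = x /\ rel_htpy (Fh F i) (Fh F v') v.

Definition acyclic {C D : CylCat} (F : CylMor C D) : Prop :=
  homotopy_surjective F /\ homotopy_fully_faithful F.

Definition detects_we {C D : CylCat} (F : CylMor C D) : Prop :=
  forall (X Y : C) (v : Hom X Y), we v <-> we (Fh F v).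

(* F_A : C(A) -> D(F A) is homotopy surjective: for every object
   (j : F A >-> Dd) of D(F A) there is an object (i : A >-> B) of C(A) and a
   weak equivalence Dd -> F B in D(F A), i.e. a weak equivalence under F A. *)
Definition slice_homotopy_surjective {C D : CylCat} (F : CylMor C D) (A : C) : Prop :=
  forall (Dd : D) (j : Hom (F A) Dd), cof j ->
    exists (B : C) (i : Hom A B), cof i /\
      exists w : Hom Dd (F B), we w /\ comp w j = Fh F i.

(* The homotopy
   category hC has as hom-sets the quotients hom X Y / heq. *)
Record HPre := {
  hob : Type;
  hhom : hob -> hob -> Type;
  hcomp : forall X Y Z, hhom Y Z -> hhom X Y -> hhom X Z;
  hid : forall X, hhom X X;
  heq : forall X Y, hhom X Y -> hhom X Y -> Prop
}.
Arguments hhom {h} _ _.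
Arguments hcomp {h X Y Z} _ _.
Arguments hid {h} _.
Arguments heq {h X Y} _ _.

(* A functor P -> Q (given on representatives) is an equivalence of the
   quotient categories: there is a quasi-inverse G, well defined and
   functorial on classes, with natural isomorphisms 1 ≅ GF and FG ≅ 1. *)
Definition hequiv {P Q : HPre} (Fo : hob P -> hob Q)
    (Fh : forall X Y, hhom X Y -> hhom (Fo X) (Fo Y)) : Prop :=
  exists (Go : hob Q -> hob P) (Gh : forall X Y, hhom X Y -> hhom (Go X) (Go Y))
         (eta : forall X, hhom X (Go (Fo X))) (eta' : forall X, hhom (Go (Fo X)) X)
         (eps : forall Y, hhom (Fo (Go Y)) Y) (eps' : forall Y, hhom Y (Fo (Go Y))),
    (forall X Y (g g' : hhom X Y), heq g g' -> heq (Gh _ _ g) (Gh _ _ g')) /\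
    (forall X Y Z (g : hhom Y Z) (f : hhom X Y),
        heq (Gh _ _ (hcomp g f)) (hcomp (Gh _ _ g) (Gh _ _ f))) /\
    (forall X, heq (Gh _ _ (hid X)) (hid (Go X))) /\
    (forall X Y (f : hhom X Y),
        heq (hcomp (Gh _ _ (Fh _ _ f)) (eta X)) (hcomp (eta Y) f)) /\
    (forall X, heq (hcomp (eta' X) (eta X)) (hid X)) /\
    (forall X, heq (hcomp (eta X) (eta' X)) (hid (Go (Fo X)))) /\
    (forall X Y (g : hhom X Y),
        heq (hcomp g (eps X)) (hcomp (eps Y) (Fh _ _ (Gh _ _ g)))) /\
    (forall Y, heq (hcomp (eps' Y) (eps Y)) (hid (Fo (Go Y)))) /\
    (forall Y, heq (hcomp (eps Y) (eps' Y)) (hid Y)).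

Definition hCat (C : CylCat) : HPre :=
  {| hob := Ob C; hhom := fun X Y => @Hom C X Y;
     hcomp := fun X Y Z g f => comp g f; hid := fun X => idm X;
     heq := fun X Y f g => htpy f g |}.

Definition hF {C D : CylCat} (F : CylMor C D) :
  forall X Y : hob (hCat C), hhom X Y -> @hhom (hCat D) (Fo F X) (Fo F Y) :=
  fun X Y f => Fh F f.

(* h(C(A)): objects are cofibrations A >-> B, morphisms are maps under A,
   identified up to homotopy relative to A (= homotopy in C(A)). *)
Definition uobj {C : CylCat} (A : C) := { B : C & { i : Hom A B | cof i } }.
Definition uhom {C : CylCat} {A : C} (X Y : uobj A) :=
  { u : Hom (projT1 X) (projT1 Y) | comp u (proj1_sig (projT2 X)) = proj1_sig (projT2 Y) }.

Definition ucomp {C : CylCat} {A : C} (X Y Z : uobj A) (g : uhom Y Z) (f : uhom X Y) : uhom X Z.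
Proof.
  exists (comp (proj1_sig g) (proj1_sig f)).
  rewrite <- comp_assoc, (proj2_sig f). exact (proj2_sig g).
Defined.

Definition uid {C : CylCat} {A : C} (X : uobj A) : uhom X X.
Proof. exists (idm (projT1 X)). apply comp_id_l. Defined.

Definition hSlice {C : CylCat} (A : C) : HPre :=
  {| hob := uobj A; hhom := @uhom C A; hcomp := @ucomp C A; hid := @uid C A;
     heq := fun X Y f g => rel_htpy (proj1_sig (projT2 X)) (proj1_sig f) (proj1_sig g) |}.

Definition FA_ob {C D : CylCat} (F : CylMor C D) (A : C) (X : uobj A) : uobj (F A) :=
  existT _ (F (projT1 X))
    (exist _ (Fh F (proj1_sig (projT2 X))) (F_cof F (proj2_sig (projT2 X)))).

Definition FA_hom {C D : CylCat} (F : CylMor C D) (A : C) (X Y : uobj A) (u : uhom X Y) :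
  uhom (FA_ob F X) (FA_ob F Y).
Proof.
  exists (Fh F (proj1_sig u)). simpl.
  rewrite <- F_comp, (proj2_sig u). reflexivity.
Defined.

Definition hFA {C D : CylCat} (F : CylMor C D) (A : C) :
  forall X Y : hob (hSlice A), hhom X Y ->
    @hhom (hSlice (F A)) (FA_ob F X) (FA_ob F Y) :=
  @FA_hom C D F A.

(* Main.v *)
Require Import Defs.
From Stdlib Require Import Classical ClassicalEpsilon ProofIrrelevance.
From Stdlib Require Import Setoid Morphisms RelationClasses.
Set Implicit Arguments.
Unset Strict Implicit.

Local Notation "g ∘ f" := (comp g f) (at level 40, left associativity).

Ltac nrm := repeat rewrite <- comp_assoc in *; repeat rewrite comp_id_l in *; repeat rewrite comp_id_r in *.

Lemma rw2 {C : Cat} {W X Y Z : C} (f : Hom Y Z) (g : Hom X Y) (h : Hom X Z) (k : Hom W X) :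
  f ∘ g = h -> f ∘ (g ∘ k) = h ∘ k.
Proof. intros E. rewrite comp_assoc, E. reflexivity. Qed.

Lemma rw2r {C : Cat} {W X Y Y' Z : C} (f : Hom Y Z) (g : Hom X Y) (h : Hom Y' Z) (h' : Hom X Y') (k : Hom W X) :
  f ∘ g = h ∘ h' -> f ∘ (g ∘ k) = h ∘ (h' ∘ k).
Proof. intros E. rewrite !comp_assoc, E. reflexivity. Qed.

Lemma rw3 {C : Cat} {V W X Y Z : C} (f : Hom Y Z) (g : Hom X Y) (h : Hom W X) (e : Hom W Z) (k : Hom V W) :
  f ∘ (g ∘ h) = e -> f ∘ (g ∘ (h ∘ k)) = e ∘ k.
Proof. intros E. rewrite <- E, !comp_assoc. reflexivity. Qed.
Lemma rw4 {C : Cat} {U V W X Y Z : C} (f : Hom Y Z) (g : Hom X Y) (h : Hom W X) (h' : Hom V W) (e : Hom V Z) (k : Hom U V) :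
  f ∘ (g ∘ (h ∘ h')) = e -> f ∘ (g ∘ (h ∘ (h' ∘ k))) = e ∘ k.
Proof. intros E. rewrite <- E, !comp_assoc. reflexivity. Qed.
Ltac nrmg := repeat rewrite <- comp_assoc; repeat rewrite comp_id_l; repeat rewrite comp_id_r.
Ltac rw H := first [rewrite (rw4 _ H) | rewrite (rw3 _ H) | rewrite (rw2 _ H) | rewrite H]; nrmg.
Ltac rwb H := first [rewrite <- (rw2r _ H) | rewrite <- (rw2 _ H) | rewrite <- H].
Ltac rwa H := repeat (rw H).

Lemma po_sym {C : Cat} {A B B' P : C} (i : Hom A B) (f : Hom A B') (p1 : Hom B P) (p2 : Hom B' P) :
  is_pushout i f p1 p2 -> is_pushout f i p2 p1.
Proof.
  intros [E U]. split; [symmetry; exact E|].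
  intros X h1 h2 E2. destruct (U X h2 h1 (eq_sym E2)) as [h [[H1 H2] Hu]].
  exists h. split; [tauto|]. intros h' [? ?]. apply Hu; tauto.
Qed.

Lemma po_uniq {C : Cat} {A B B' P X : C} (i : Hom A B) (f : Hom A B') (p1 : Hom B P) (p2 : Hom B' P) (h h' : Hom P X) :
  is_pushout i f p1 p2 -> h ∘ p1 = h' ∘ p1 -> h ∘ p2 = h' ∘ p2 -> h = h'.
Proof.
  intros [E U] E1 E2.
  assert (Ec : (h ∘ p1) ∘ i = (h ∘ p2) ∘ f) by (rewrite <- !comp_assoc, E; reflexivity).
  destruct (U X _ _ Ec) as [k [_ Hk]].
  transitivity k; [symmetry|]; apply Hk; auto.
Qed.

Lemma po_ind {C : Cat} {A B B' P X : C} (i : Hom A B) (f : Hom A B') (p1 : Hom B P) (p2 : Hom B' P)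
   (h1 : Hom B X) (h2 : Hom B' X) :
  is_pushout i f p1 p2 -> h1 ∘ i = h2 ∘ f -> exists h : Hom P X, h ∘ p1 = h1 /\ h ∘ p2 = h2.
Proof. intros [E U] Ec. destruct (U X _ _ Ec) as [k [Hk _]]. exists k; exact Hk. Qed.

Lemma po_comm {C : Cat} {A B B' P : C} (i : Hom A B) (f : Hom A B') (p1 : Hom B P) (p2 : Hom B' P) :
  is_pushout i f p1 p2 -> p1 ∘ i = p2 ∘ f.
Proof. intros [E _]; exact E. Qed.

Section Basic.
Variable C : CylCat.

Lemma zero_eq (X : C) (f g : Hom (@zero C) X) : f = g.
Proof. rewrite (init_unique f), (init_unique g). reflexivity. Qed.

Lemma we_id (X : C) : we (idm X).
Proof. apply we_iso. exists (idm X). rewrite comp_id_l. auto. Qed.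

Lemma cof_id (X : C) : cof (idm X).
Proof. apply cof_iso. exists (idm X). rewrite comp_id_l. auto. Qed.

Lemma we23a (X Y Z : C) (f : Hom X Y) (g : Hom Y Z) : we (g ∘ f) -> we f -> we g.
Proof.
  intros H1 H2. assert (H3 : we (f ∘ idm X)) by (rewrite comp_id_r; auto).
  destruct (we_2of6 H1 H3) as [? _]; auto.
Qed.

Lemma we23b (X Y Z : C) (f : Hom X Y) (g : Hom Y Z) : we (g ∘ f) -> we g -> we f.
Proof.
  intros H1 H2. assert (H3 : we (idm Z ∘ g)) by (rewrite comp_id_l; auto).
  destruct (we_2of6 H3 H1) as [_ [_ [? _]]]; auto.
Qed.

Lemma we_sect (X Y : C) (s : Hom X Y) (p : Hom Y X) : p ∘ s = idm X -> we p -> we s.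
Proof. intros E H. apply (we23b (g:=p)); auto. rewrite E; apply we_id. Qed.

Lemma we_retr (X Y : C) (s : Hom X Y) (p : Hom Y X) : p ∘ s = idm X -> we s -> we p.
Proof. intros E H. apply (we23a (f:=s)); auto. rewrite E; apply we_id. Qed.

Lemma coprod_ex (X Y : C) : exists (P : C) (a1 : Hom X P) (a2 : Hom Y P),
  is_pushout (init X) (init Y) a1 a2.
Proof. apply pushout_exists, init_cof. Qed.

Lemma coprod_ind (X Y P Z : C) (a1 : Hom X P) (a2 : Hom Y P) (h1 : Hom X Z) (h2 : Hom Y Z) :
  is_pushout (init X) (init Y) a1 a2 -> exists h, h ∘ a1 = h1 /\ h ∘ a2 = h2.
Proof. intros Hp. apply (po_ind Hp). apply zero_eq. Qed.

Lemma po_cof1 (A B B' P : C) (i : Hom A B) (f : Hom A B') (p1 : Hom B P) (p2 : Hom B' P) :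
  cof f -> is_pushout i f p1 p2 -> cof p1.
Proof. intros Hf Hp. exact (pushout_cof Hf (po_sym Hp)). Qed.

Lemma factor2 (X Y : C) (f : Hom X Y) : exists (M : C) (j : Hom X M) (p : Hom M Y),
  cof j /\ we p /\ p ∘ j = f /\ exists t : Hom Y M, cof t /\ we t /\ p ∘ t = idm Y.
Proof.
  destruct (coprod_ex X X) as [XX [i1 [i2 Hxx]]].
  destruct (cylinder Hxx) as [I [c [pi [Hc [Hpi [E1 E2]]]]]].
  destruct (coprod_ex X Y) as [XY [a1 [a2 Hxy]]].
  destruct (coprod_ind a1 (a2 ∘ f) Hxx) as [k [Hk1 Hk2]].
  destruct (pushout_exists k Hc) as [M [m [n Hm]]].
  pose proof (pushout_cof Hc Hm) as Hn.
  destruct (coprod_ind f (idm Y) Hxy) as [u [Hu1 Hu2]].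
  assert (Ecomp : (f ∘ pi) ∘ c = u ∘ k).
  { apply (po_uniq Hxx); nrm.
    - rewrite E1, Hk1, Hu1. nrmg; reflexivity.
    - rewrite E2. rw Hk2. rw Hu2. nrmg; reflexivity. }
  destruct (po_ind Hm Ecomp) as [p [Hp1 Hp2]].
  assert (Ht : cof (n ∘ a2)) by (apply cof_comp; auto; apply (pushout_cof (init_cof _) Hxy)).
  assert (Ept : p ∘ (n ∘ a2) = idm Y) by (rw Hp2; rw Hu2; reflexivity).
  assert (Hpo : is_pushout (c ∘ i2) f m (n ∘ a2)).
    { split.
      - rewrite comp_assoc, (po_comm Hm). nrm. rewrite Hk2. reflexivity.
      - intros Z h1 h2 Eh.
        destruct (coprod_ind (h1 ∘ (c ∘ i1)) h2 Hxy) as [g [Hg1 Hg2]].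
        assert (Eg : h1 ∘ c = g ∘ k).
        { apply (po_uniq Hxx); nrm.
          - rewrite Hk1, Hg1. reflexivity.
          - rewrite Hk2, (rw2 _ Hg2). rewrite <- Eh. nrm. reflexivity. }
        destruct (po_ind Hm Eg) as [h [Hh1 Hh2]].
        exists h. split.
        + split; auto. rewrite comp_assoc, Hh2. auto.
        + intros h' [H1' H2']. apply (po_uniq Hm).
          * rewrite H1', Hh1. reflexivity.
          * rewrite Hh2. apply (po_uniq Hxy).
            -- rewrite Hg1, <- Hk1, <- !comp_assoc. rwb (po_comm Hm).
               rw H1'. reflexivity.
            -- rewrite Hg2, <- H2'. nrm. reflexivity. }
  assert (Hci2 : cof (c ∘ i2)) by (apply cof_comp; auto; apply (pushout_cof (init_cof _) Hxx)).
  assert (Hwi2 : we (c ∘ i2)) by (apply (we_sect (p:=pi)); auto).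
  destruct (pushout_tcof Hci2 Hwi2 Hpo) as [_ Wt].
  assert (Wp : we p) by (apply (we_retr Ept); auto).
  exists M, (n ∘ a1), p. split; [|split; [|split]].
  - apply cof_comp; auto. apply (po_cof1 (init_cof _) Hxy).
  - exact Wp.
  - rewrite comp_assoc, Hp2, Hu1. reflexivity.
  - exists (n ∘ a2). auto.
Qed.

Lemma factor (X Y : C) (f : Hom X Y) : exists (M : C) (j : Hom X M) (p : Hom M Y),
  cof j /\ we p /\ p ∘ j = f.
Proof. destruct (factor2 f) as [M [j [p [? [? [? _]]]]]]. exists M, j, p. auto. Qed.

End Basic.



Definition relcyl {C : CylCat} {A B : C} (i : Hom A B) (Q : C) (q1 q2 : Hom B Q) (I : C)
  (c : Hom Q I) (p : Hom I B) : Prop :=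
  is_pushout i i q1 q2 /\ cof c /\ we p /\ p ∘ (c ∘ q1) = idm B /\ p ∘ (c ∘ q2) = idm B.
Arguments relcyl {C A B} i Q q1 q2 I c p.

Section Htpy.
Variable C : CylCat.

Lemma relcyl_ex (A B : C) (i : Hom A B) : cof i ->
  exists Q q1 q2 I c p, @relcyl C A B i Q q1 q2 I c p.
Proof.
  intros Hi. destruct (pushout_exists i Hi) as [Q [q1 [q2 Hq]]].
  destruct (po_ind (h1 := idm B) (h2 := idm B) Hq eq_refl) as [d [D1 D2]].
  destruct (factor d) as [I [c [p [Hc [Hp E]]]]].
  exists Q, q1, q2, I, c, p. refine (conj Hq (conj Hc (conj Hp (conj _ _)))).
  - rewrite comp_assoc, E; auto.
  - rewrite comp_assoc, E; auto.
Qed.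

Lemma rel_htpy_intro (A B X : C) (i : Hom A B) Q q1 q2 I c p (H : Hom I X) (f g : Hom B X) :
  relcyl i Q q1 q2 I c p -> H ∘ (c ∘ q1) = f -> H ∘ (c ∘ q2) = g -> rel_htpy i f g.
Proof. intros [? [? [? [? ?]]]] ? ?. exists Q, q1, q2, I, c, p, H. tauto. Qed.

Lemma transport (A B A' B' X : C) (i : Hom A B) (i' : Hom A' B') (u : Hom B' B) (a : Hom A' A)
  (f g : Hom B X) Q' q1' q2' I' c' p' :
  u ∘ i' = i ∘ a -> rel_htpy i f g -> relcyl i' Q' q1' q2' I' c' p' ->
  exists H' : Hom I' X, H' ∘ (c' ∘ q1') = f ∘ u /\ H' ∘ (c' ∘ q2') = g ∘ u.
Proof.
  intros Eu [Q [q1 [q2 [I [c [p [H [Hq [Hc [Hp [Ep1 [Ep2 [Ef Eg]]]]]]]]]]]]]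
    [Hq' [Hc' [Hp' [Ep1' Ep2']]]].
  destruct (po_ind (h1 := q1 ∘ u) (h2 := q2 ∘ u) Hq') as [psi [Ps1 Ps2]].
  { nrm. rewrite Eu. rewrite comp_assoc, (po_comm Hq). nrm. reflexivity. }
  destruct (pushout_exists (c ∘ psi) Hc') as [N [n1 [n2 Hn]]].
  pose proof (pushout_cof Hc' Hn) as Hn2.
  destruct (po_ind (h1 := u ∘ p') (h2 := p) Hn) as [nu [Nu1 Nu2]].
  { apply (po_uniq Hq'); nrm.
    - rewrite Ep1'. rw Ps1. rw Ep1. nrm. reflexivity.
    - rewrite Ep2'. rw Ps2. rw Ep2. nrm. reflexivity. }
  destruct (factor nu) as [M [k [pm [Hk [Hpm Ek]]]]].
  assert (Hw : we (k ∘ n2)).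
  { apply (we23b (g := pm)); auto. rewrite comp_assoc, Ek, Nu2. auto. }
  destruct (tcof_retract (cof_comp Hn2 Hk) Hw) as [r Hr].
  exists (H ∘ (r ∘ (k ∘ n1))). nrm. split.
  - rw (po_comm Hn). nrm. rw Hr. rw Ps1. rw Ef. reflexivity.
  - rw (po_comm Hn). nrm. rw Hr. rw Ps2. rw Eg. reflexivity.
Qed.

Lemma htpy_pre (A B A' B' X : C) (i : Hom A B) (i' : Hom A' B') (u : Hom B' B) (a : Hom A' A)
  (f g : Hom B X) : cof i' -> u ∘ i' = i ∘ a -> rel_htpy i f g -> rel_htpy i' (f ∘ u) (g ∘ u).
Proof.
  intros Hi' Eu Hfg. destruct (relcyl_ex Hi') as [Q [q1 [q2 [I [c [p Hr]]]]]].
  destruct (transport Eu Hfg Hr) as [H [E1 E2]].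
  exact (rel_htpy_intro Hr E1 E2).
Qed.

Lemma rel_htpy_eq (A B X : C) (i : Hom A B) (f g : Hom B X) : rel_htpy i f g -> f ∘ i = g ∘ i.
Proof.
  intros [Q [q1 [q2 [I [c [p [H [Hq [_ [_ [_ [_ [Ef Eg]]]]]]]]]]]]].
  rewrite <- Ef, <- Eg. nrm. rewrite (po_comm Hq). reflexivity.
Qed.

Lemma rel_refl (A B X : C) (i : Hom A B) (f : Hom B X) : cof i -> rel_htpy i f f.
Proof.
  intros Hi. destruct (relcyl_ex Hi) as [Q [q1 [q2 [I [c [p Hr]]]]]].
  apply (rel_htpy_intro (H := f ∘ p) Hr); destruct Hr as [? [? [? [E1 E2]]]]; nrm.
  - rewrite E1; nrm; auto.
  - rewrite E2; nrm; auto.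
Qed.

Lemma rel_sym (A B X : C) (i : Hom A B) (f g : Hom B X) : rel_htpy i f g -> rel_htpy i g f.
Proof.
  intros [Q [q1 [q2 [I [c [p [H [Hq [Hc [Hp [Ep1 [Ep2 [Ef Eg]]]]]]]]]]]]].
  exists Q, q2, q1, I, c, p, H. pose proof (po_sym Hq). tauto.
Qed.

Lemma rel_post (A B X Y : C) (i : Hom A B) (f g : Hom B X) (h : Hom X Y) :
  rel_htpy i f g -> rel_htpy i (h ∘ f) (h ∘ g).
Proof.
  intros [Q [q1 [q2 [I [c [p [H [Hq [Hc [Hp [Ep1 [Ep2 [Ef Eg]]]]]]]]]]]]].
  exists Q, q1, q2, I, c, p, (h ∘ H). do 5 (split; [assumption|]). split; rewrite <- comp_assoc; [rewrite Ef|rewrite Eg]; auto.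
Qed.

Lemma rel_trans (A B X : C) (i : Hom A B) (f g h : Hom B X) : cof i ->
  rel_htpy i f g -> rel_htpy i g h -> rel_htpy i f h.
Proof.
  intros Hi H1 H2. destruct (relcyl_ex Hi) as [Q [q1 [q2 [I [c [p Hr]]]]]].
  destruct (transport (u := idm B) (a := idm A) (eq_trans (comp_id_l i) (eq_sym (comp_id_r i))) H1 Hr)
    as [K1 [E11 E12]].
  destruct (transport (u := idm B) (a := idm A) (eq_trans (comp_id_l i) (eq_sym (comp_id_r i))) H2 Hr)
    as [K2 [E21 E22]].
  rewrite comp_id_r in *.
  pose proof Hr as [Hq [Hc [Hp [Ep1 Ep2]]]].
  assert (Hq1 : cof q1) by exact (po_cof1 Hi Hq).
  assert (Hq2 : cof q2) by exact (pushout_cof Hi Hq).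
  assert (He2 : cof (c ∘ q2)) by (apply cof_comp; auto).
  assert (We2 : we (c ∘ q2)) by (apply (we_sect (p := p)); auto).
  destruct (pushout_exists (c ∘ q1) He2) as [N [n1 [n2 Hn]]].
  destruct (pushout_tcof He2 We2 Hn) as [Hn2c Hn2w].
  destruct (po_ind (h1 := K1) (h2 := K2) Hn) as [K [Ka Kb]]. { rewrite E12, E21. reflexivity. }
  destruct (po_ind (h1 := p) (h2 := p) Hn) as [nu [Nu1 Nu2]]. { rewrite Ep1, Ep2. reflexivity. }
  destruct (po_ind (h1 := n1 ∘ (c ∘ q1)) (h2 := n2 ∘ (c ∘ q2)) Hq) as [phi [Ph1 Ph2]].
  { nrm. rewrite (po_comm Hq). rw (po_comm Hn). rewrite (po_comm Hq). reflexivity. }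
  destruct (factor phi) as [M [al [be [Hal [Hbe Eab]]]]].
  assert (Wnu : we nu) by (apply (we23a (f := n2)); auto; rewrite Nu2; auto).
  apply (rel_htpy_intro (Q := Q) (q1 := q1) (q2 := q2) (I := M) (c := al) (p := nu ∘ be) (H := K ∘ be)).
  - refine (conj Hq (conj Hal (conj _ (conj _ _)))).
    + apply we_comp; auto.
    + nrm. rw Eab. rw Ph1. rw Nu1. auto.
    + nrm. rw Eab. rw Ph2. rw Nu2. auto.
  - nrm. rw Eab. rw Ph1. rw Ka. auto.
  - nrm. rw Eab. rw Ph2. rw Kb. auto.
Qed.

Lemma tc_htpy (A B X : C) (j : Hom A B) (f g : Hom B X) : cof j -> we j -> f ∘ j = g ∘ j ->
  rel_htpy j f g.
Proof.
  intros Hj Wj E. destruct (relcyl_ex Hj) as [Q [q1 [q2 [I [c [p Hr]]]]]].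
  pose proof Hr as [Hq [Hc [Hp [Ep1 Ep2]]]].
  destruct (pushout_tcof Hj Wj Hq) as [Hq2 Wq2].
  assert (Wc : we c).
  { apply (we23a (f := q2)); auto. apply (we_sect (p := p)); auto. }
  destruct (tcof_retract Hc Wc) as [r Er].
  destruct (po_ind (h1 := f) (h2 := g) Hq E) as [G [G1 G2]].
  apply (rel_htpy_intro (H := G ∘ r) Hr); nrm; rw Er; auto.
Qed.

End Htpy.


Ltac rw H ::= nrmg; first [rewrite (rw4 _ H) | rewrite (rw3 _ H) | rewrite (rw2 _ H) | rewrite H]; nrmg.

Section Abs.
Variable C : CylCat.

Lemma coarsen (A B X : C) (i : Hom A B) (f g : Hom B X) : rel_htpy i f g -> htpy f g.
Proof.
  intros H. unfold htpy.
  pose proof (@htpy_pre C A B zero B X i (init B) (idm B) (init A) f g (init_cof _) (zero_eq _ _) H) as K.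
  rewrite !comp_id_r in K. exact K.
Qed.

Lemma htpy_pre_abs (B B' X : C) (u : Hom B' B) (f g : Hom B X) : htpy f g -> htpy (f ∘ u) (g ∘ u).
Proof. intros H. exact (htpy_pre (a := idm zero) (init_cof _) (zero_eq _ _) H). Qed.

Global Instance htpy_equiv (B X : C) : Equivalence (@htpy C B X).
Proof.
  split.
  - intros f. apply rel_refl, init_cof.
  - intros f g. apply rel_sym.
  - intros f g h. apply rel_trans, init_cof.
Qed.

Global Instance comp_proper (X Y Z : C) :
  Proper (htpy ==> htpy ==> htpy) (@comp (ccat C) X Y Z).
Proof.
  intros g g' Hg f f' Hf. transitivity (g' ∘ f).
  - apply htpy_pre_abs; auto.
  - apply rel_post; auto.
Qed.

Lemma htpy_we (X Y : C) (f f' : Hom X Y) : htpy f f' -> we f -> we f'.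
Proof.
  intros [Q [q1 [q2 [I [c [p [H [Hq [Hc [Hp [Ep1 [Ep2 [Ef Eg]]]]]]]]]]]]] Wf.
  assert (W1 : we (c ∘ q1)) by (apply (we_sect Ep1); auto).
  assert (W2 : we (c ∘ q2)) by (apply (we_sect Ep2); auto).
  assert (WH : we H) by (apply (we23a (f := c ∘ q1)); auto; rewrite Ef; auto).
  rewrite <- Eg. apply we_comp; auto.
Qed.

Definition hequ (X Y : C) (w : Hom X Y) : Prop :=
  exists g : Hom Y X, htpy (g ∘ w) (idm X) /\ htpy (w ∘ g) (idm Y).

Lemma whitehead1 (X Y : C) (w : Hom X Y) : we w -> hequ w.
Proof.
  intros Ww. destruct (factor2 w) as [M [j [p [Hj [Wp [Ew [t [Ht [Wt Et]]]]]]]]].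
  assert (Wj : we j) by (apply (we23b (g := p)); auto; rewrite Ew; auto).
  destruct (tcof_retract Hj Wj) as [r Er].
  assert (H1 : htpy (t ∘ p) (idm M)).
  { apply (coarsen (i := t)). apply tc_htpy; auto. nrmg. rw Et. reflexivity. }
  assert (H2 : htpy (j ∘ r) (idm M)).
  { apply (coarsen (i := j)). apply tc_htpy; auto. nrmg. rw Er. reflexivity. }
  exists (r ∘ t). split.
  - rewrite <- Ew. rewrite (comp_assoc j p (r ∘ t)), <- (comp_assoc p t r).
    rewrite H1, comp_id_r. exact (reflexivity _ : htpy _ _) || (rewrite Er; reflexivity).
  - rewrite <- Ew. rewrite <- (comp_assoc (r ∘ t) j p), (comp_assoc t r j).
    rewrite H2, comp_id_l, Et. reflexivity.
Qed.

Lemma whitehead2 (X Y : C) (w : Hom X Y) : hequ w -> we w.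
Proof.
  intros [g [H1 H2]].
  assert (W1 : we (g ∘ w)) by (symmetry in H1; apply (htpy_we H1), we_id).
  assert (W2 : we (w ∘ g)) by (symmetry in H2; apply (htpy_we H2), we_id).
  destruct (we_2of6 W2 W1) as [? _]. auto.
Qed.

Lemma hep (A B X : C) (j : Hom A B) (f : Hom B X) (g : Hom A X) :
  cof j -> htpy (f ∘ j) g -> we f -> exists f' : Hom B X, f' ∘ j = g /\ we f'.
Proof.
  intros Hj [Q [q1 [q2 [I [c [p [H [Hq [Hc [Hp [Ep1 [Ep2 [Ef Eg]]]]]]]]]]]]] Wf.
  assert (He1 : cof (c ∘ q1)) by (apply cof_comp; auto; exact (po_cof1 (init_cof _) Hq)).
  assert (He2 : cof (c ∘ q2)) by (apply cof_comp; auto; exact (pushout_cof (init_cof _) Hq)).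
  assert (We1 : we (c ∘ q1)) by (apply (we_sect Ep1); auto).
  destruct (pushout_exists j He1) as [N [tau [sig Hn]]].
  destruct (pushout_tcof He1 We1 Hn) as [Hsig Wsig].
  destruct (pushout_exists (tau ∘ (c ∘ q2)) Hj) as [N1 [sig2 [nu Hn1]]].
  pose proof (pushout_cof Hj Hn1) as Hnu.
  destruct (po_ind (h1 := j ∘ p) (h2 := idm B) Hn) as [pi0 [P01 P02]].
  { rw Ep1. reflexivity. }
  destruct (po_ind (h1 := idm B) (h2 := pi0) Hn1) as [pi1 [P11 P12]].
  { rw P01. rw Ep2. reflexivity. }
  destruct (factor pi1) as [IB [mu [piB [Hmu [WpiB Emu]]]]].
  assert (Wzs : we (mu ∘ (nu ∘ sig))).
  { apply (we_sect (p := piB)); auto. rw Emu. rw P12. rw P02. reflexivity. }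
  assert (Wz : we (mu ∘ nu)).
  { apply (we23a (f := sig)); auto. rewrite <- comp_assoc; auto. }
  destruct (tcof_retract (cof_comp Hnu Hmu) Wz) as [r Er].
  destruct (po_ind (h1 := H) (h2 := f) Hn) as [G0 [G01 G02]].
  { rewrite Ef. reflexivity. }
  exists (G0 ∘ (r ∘ (mu ∘ sig2))). split.
  - nrm. rw (po_comm Hn1). rw Er. rw G01. exact Eg.
  - assert (WG : we (G0 ∘ r)).
    { apply (we23a (f := mu ∘ (nu ∘ sig))); auto. rw Er. rewrite G02. auto. }
    assert (Wm : we (mu ∘ sig2)).
    { apply (we_sect (p := piB)); auto. rw Emu. rw P11. reflexivity. }
    rewrite comp_assoc. apply we_comp; auto.
Qed.

End Abs.



Definition full {C D : CylCat} (F : CylMor C D) : Prop :=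
  forall (B X : C) (v : Hom (F B) (F X)), exists u : Hom B X, htpy (Fh F u) v.
Definition faithful {C D : CylCat} (F : CylMor C D) : Prop :=
  forall (B X : C) (u u' : Hom B X), htpy (Fh F u) (Fh F u') -> htpy u u'.

Section Mor.
Variables C D : CylCat.
Variable F : CylMor C D.

Lemma Finit_eq (Y : D) (f g : Hom (F zero) Y) : f = g.
Proof.
  destruct (F_init F Y) as [u [_ Hu]].
  rewrite <- (Hu f I), <- (Hu g I). reflexivity.
Qed.

Lemma F_relcyl (A B : C) (i : Hom A B) Q q1 q2 I c p : cof i -> relcyl i Q q1 q2 I c p ->
  relcyl (Fh F i) (F Q) (Fh F q1) (Fh F q2) (F I) (Fh F c) (Fh F p).
Proof.
  intros Hi [Hq [Hc [Hp [E1 E2]]]].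
  refine (conj (F_pushout F Hi Hq) (conj (F_cof F Hc) (conj (F_we F Hp) (conj _ _)))).
  - rewrite <- !F_comp, E1, F_id. reflexivity.
  - rewrite <- !F_comp, E2, F_id. reflexivity.
Qed.

Lemma F_rel (A B X : C) (i : Hom A B) (f g : Hom B X) : cof i -> rel_htpy i f g ->
  rel_htpy (Fh F i) (Fh F f) (Fh F g).
Proof.
  intros Hi [Q [q1 [q2 [I [c [p [H [Hq [Hc [Hp [Ep1 [Ep2 [Ef Eg]]]]]]]]]]]]].
  assert (R : relcyl i Q q1 q2 I c p) by (repeat split; auto; apply Hq).
  apply (rel_htpy_intro (H := Fh F H) (F_relcyl Hi R)); rewrite <- !F_comp; congruence.
Qed.

Lemma F_htpy (B X : C) (f g : Hom B X) : htpy f g -> htpy (Fh F f) (Fh F g).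
Proof. intros H. apply (coarsen (i := Fh F (init B))). apply F_rel; auto. apply init_cof. Qed.

Lemma phi0 : exists phi : Hom (F zero) (@zero D), True.
Proof. destruct (F_init F zero) as [u _]. exists u; auto. Qed.

Lemma abs_to_F (B : C) (Y : D) (f g : Hom (F B) Y) : htpy f g -> rel_htpy (Fh F (init B)) f g.
Proof.
  intros H. destruct phi0 as [phi _].
  pose proof (@htpy_pre D _ _ _ _ _ (init (F B)) (Fh F (init B)) (idm (F B)) phi f g
     (F_cof F (init_cof B)) (Finit_eq _ _) H) as K.
  rewrite !comp_id_r in K. exact K.
Qed.

Lemma acyc_full : homotopy_fully_faithful F -> full F.
Proof.
  intros Hf B X v. destruct (Hf zero B X (init B) (init X) v (init_cof B) (Finit_eq _ _)) as [u [_ Hu]].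
  exists u. exact (coarsen Hu).
Qed.

Lemma acyc_faith : homotopy_fully_faithful F -> faithful F.
Proof.
  intros Hf B X u u' Hu.
  destruct (relcyl_ex (init_cof B)) as [Q [q1 [q2 [I [c [p R]]]]]].
  pose proof (F_relcyl (init_cof B) R) as FR.
  destruct (transport (Finit_eq _ _ : idm (F B) ∘ Fh F (init B) = init (F B) ∘ proj1_sig (constructive_indefinite_description _ phi0))
     Hu FR) as [H' [E1 E2]].
  rewrite comp_id_r in E1, E2.
  pose proof R as [Hq [Hc _]].
  destruct (po_ind (h1 := u) (h2 := u') Hq (zero_eq _ _)) as [G [G1 G2]].
  assert (EH : H' ∘ Fh F c = Fh F G).
  { apply (po_uniq (F_pushout F (init_cof B) Hq)).
    - rewrite <- comp_assoc, E1, <- F_comp, G1. reflexivity.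
    - rewrite <- comp_assoc, E2, <- F_comp, G2. reflexivity. }
  destruct (Hf _ _ _ c G H' Hc EH) as [v' [Ev' _]].
  apply (rel_htpy_intro (H := v') R); rw Ev'; auto.
Qed.

Lemma sff_detects : full F -> faithful F -> detects_we F.
Proof.
  intros Hfu Hfa X Y v. split; [apply F_we|]. intros Wv.
  destruct (whitehead1 Wv) as [gb [H1 H2]].
  destruct (Hfu _ _ gb) as [g Hg].
  apply whitehead2. exists g. split; apply Hfa; rewrite F_comp, F_id.
  - rewrite Hg. exact H1.
  - rewrite Hg. exact H2.
Qed.

Lemma sf_slicehs : homotopy_surjective F -> full F -> forall A : C, slice_homotopy_surjective F A.
Proof.
  intros Hs Hfu A Dd j Hj.
  destruct (Hs Dd) as [C0 [w0 Ww0]].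
  destruct (Hfu _ _ (w0 ∘ j)) as [v' Hv'].
  destruct (factor v') as [B [i [p [Hi [Wp Ep]]]]].
  destruct (whitehead1 Wp) as [t [Ht1 Ht2]].
  assert (Wt : we t) by (apply whitehead2; exists p; split; auto).
  assert (Wf : we (Fh F t ∘ w0)) by (apply we_comp; auto; apply F_we; auto).
  destruct (@hep D _ _ _ j (Fh F t ∘ w0) (Fh F i) Hj) as [w [Ew Ww]]; auto.
  - rewrite <- comp_assoc, <- Hv', <- F_comp, <- Ep.
    apply F_htpy. rewrite (comp_assoc i p t), Ht1, comp_id_l. reflexivity.
  - exists B, i. split; auto. exists w. auto.
Qed.

Lemma two_hs : (forall A : C, slice_homotopy_surjective F A) -> homotopy_surjective F.
Proof.
  intros Hs Dd.
  destruct phi0 as [phi _].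
  assert (Hphi : cof phi).
  { apply cof_iso. exists (init (F zero)). split; [apply Finit_eq|apply zero_eq]. }
  destruct (Hs zero Dd (init Dd ∘ phi) (cof_comp Hphi (init_cof _))) as [B [i [_ [w [Ww _]]]]].
  exists B, w. exact Ww.
Qed.

Lemma two_hff : detects_we F -> (forall A : C, slice_homotopy_surjective F A) ->
  homotopy_fully_faithful F.
Proof.
  intros Hd Hs A B X i x v Hi Ev.
  destruct (pushout_exists x Hi) as [P [iB [iX Hp]]].
  pose proof (F_pushout F Hi Hp) as FP.
  pose proof (pushout_cof Hi Hp) as HiX.
  destruct (po_ind (h1 := v) (h2 := idm (F X)) FP) as [r [R1 R2]].
  { rewrite Ev, comp_id_l. reflexivity. }
  destruct (factor r) as [E [k [q [Hk [Wq Eq]]]]].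
  destruct (Hs P E k Hk) as [B' [i' [Hi' [w [Ww Ew]]]]].
  assert (Ws : we (k ∘ Fh F iX)).
  { apply (we_sect (p := q)); auto. rw Eq. exact R2. }
  assert (Ft : Fh F (i' ∘ iX) = w ∘ (k ∘ Fh F iX)).
  { rewrite F_comp, <- Ew. nrmg. reflexivity. }
  assert (Wt : we (i' ∘ iX)) by (apply Hd; rewrite Ft; apply we_comp; auto).
  destruct (tcof_retract (cof_comp HiX Hi') Wt) as [rho Er].
  exists (rho ∘ (i' ∘ iB)). split.
  - rw (po_comm Hp). rw Er. reflexivity.
  - assert (Hs' : cof (k ∘ Fh F iX)) by (apply cof_comp; auto; apply F_cof; auto).
    assert (T : rel_htpy (k ∘ Fh F iX) (Fh F rho ∘ w) q).
    { apply tc_htpy; auto. nrmg. rewrite <- Ft, <- F_comp, Er, F_id. rw Eq. rewrite R2. reflexivity. }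
    pose proof (@htpy_pre D _ _ _ _ _ (k ∘ Fh F iX) (Fh F i) (k ∘ Fh F iB) (Fh F x) (Fh F rho ∘ w) q
      (F_cof F Hi)) as K.
    assert (Ek : k ∘ Fh F iB ∘ Fh F i = k ∘ Fh F iX ∘ Fh F x).
    { nrmg. rewrite <- !F_comp, (po_comm Hp). reflexivity. }
    specialize (K Ek T).
    replace (Fh F (rho ∘ (i' ∘ iB))) with (Fh F rho ∘ w ∘ (k ∘ Fh F iB)).
    + replace v with (q ∘ (k ∘ Fh F iB)); [exact K|]. rw Eq. exact R1.
    + rewrite !F_comp. nrmg. rw Ew. reflexivity.
Qed.

End Mor.



Section Equiv.
Variables C D : CylCat.
Variable F : CylMor C D.

Global Instance Fh_proper (X Y : C) : Proper (htpy ==> htpy) (@Fh C D F X Y).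
Proof. intros f g H. apply F_htpy; auto. Qed.

Definition hequivE : Prop :=
  exists (Go : D -> C) (Gh : forall X Y : D, Hom X Y -> Hom (Go X) (Go Y))
         (eta : forall X : C, Hom X (Go (F X))) (eta' : forall X : C, Hom (Go (F X)) X)
         (eps : forall Y : D, Hom (F (Go Y)) Y) (eps' : forall Y : D, Hom Y (F (Go Y))),
    (forall X Y (g g' : Hom X Y), htpy g g' -> htpy (Gh _ _ g) (Gh _ _ g')) /\
    (forall X Y Z (g : Hom Y Z) (f : Hom X Y),
        htpy (Gh _ _ (g ∘ f)) (Gh _ _ g ∘ Gh _ _ f)) /\
    (forall X, htpy (Gh _ _ (idm X)) (idm (Go X))) /\
    (forall X Y (f : Hom X Y),
        htpy (Gh _ _ (Fh F f) ∘ eta X) (eta Y ∘ f)) /\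
    (forall X, htpy (eta' X ∘ eta X) (idm X)) /\
    (forall X, htpy (eta X ∘ eta' X) (idm (Go (F X)))) /\
    (forall X Y (g : Hom X Y),
        htpy (g ∘ eps X) (eps Y ∘ Fh F (Gh _ _ g))) /\
    (forall Y, htpy (eps' Y ∘ eps Y) (idm (F (Go Y)))) /\
    (forall Y, htpy (eps Y ∘ eps' Y) (idm Y)).

Lemma hequivE_iff : @hequiv (hCat C) (hCat D) (Fo F) (hF F) <-> hequivE.
Proof. reflexivity. Qed.

Lemma hequiv_sff : @hequiv (hCat C) (hCat D) (Fo F) (hF F) ->
  homotopy_surjective F /\ full F /\ faithful F.
Proof.
  rewrite hequivE_iff.
  intros [Go [Gh [eta [eta' [eps [eps' [P1 [P2 [P3 [P4 [P5 [P6 [P7 [P8 P9]]]]]]]]]]]]]].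
  assert (Gfaith : forall (Y Y' : D) (g g' : Hom Y Y'), htpy (Gh _ _ g) (Gh _ _ g') -> htpy g g').
  { intros Y Y' g g' Hg.
    transitivity (g ∘ (eps Y ∘ eps' Y)). { rewrite P9, comp_id_r. reflexivity. }
    rewrite comp_assoc, P7. rewrite Hg. rewrite <- P7. rewrite <- comp_assoc, P9, comp_id_r. reflexivity. }
  split; [|split].
  - intros Y. exists (Go Y), (eps' Y). apply whitehead2. exists (eps Y). split; auto.
  - intros B X v. exists (eta' X ∘ (Gh _ _ v ∘ eta B)). apply Gfaith.
    transitivity (Gh _ _ (Fh F (eta' X ∘ (Gh _ _ v ∘ eta B))) ∘ (eta B ∘ eta' B)).
    { rewrite P6, comp_id_r. reflexivity. }
    rewrite comp_assoc, P4. nrmg. rewrite (comp_assoc (Gh _ _ v ∘ (eta B ∘ eta' B)) (eta' X) (eta X)).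
    rewrite P6, comp_id_l. rewrite P6, comp_id_r. reflexivity.
  - intros B X u u' Hu.
    transitivity (eta' X ∘ (eta X ∘ u)). { rewrite comp_assoc, P5, comp_id_l. reflexivity. }
    rewrite <- P4. rewrite (P1 _ _ _ _ Hu). rewrite P4. rewrite comp_assoc, P5, comp_id_l. reflexivity.
Qed.

Lemma choose {A : Type} {B : A -> Type} (P : forall a, B a -> Prop) :
  (forall a, exists b, P a b) -> exists f : forall a, B a, forall a, P a (f a).
Proof.
  intros H. exists (fun a => proj1_sig (constructive_indefinite_description _ (H a))).
  intros a. exact (proj2_sig (constructive_indefinite_description _ (H a))).
Qed.

Lemma sff_hequiv : homotopy_surjective F -> full F -> faithful F ->
  @hequiv (hCat C) (hCat D) (Fo F) (hF F).
Proof.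
  intros Hs Hfu Hfa. rewrite hequivE_iff.
  destruct (@choose D (fun Y => {Cc : C & Hom Y (F Cc)}) (fun Y p => we (projT2 p))) as [G0 HG0].
  { intros Y. destruct (Hs Y) as [Cc [w Hw]]. exists (existT _ Cc w). exact Hw. }
  set (Go := fun Y => projT1 (G0 Y)).
  set (w := fun Y => projT2 (G0 Y) : Hom Y (F (Go Y))).
  destruct (@choose D (fun Y => Hom (F (Go Y)) Y)
     (fun Y g => htpy (g ∘ w Y) (idm Y) /\ htpy (w Y ∘ g) (idm (F (Go Y))))) as [wb Hwb].
  { intros Y. exact (whitehead1 (HG0 Y)). }
  destruct (@choose {Y : D & {Y' : D & Hom Y Y'}} (fun t => Hom (Go (projT1 t)) (Go (projT1 (projT2 t))))
     (fun t u => htpy (Fh F u) (w (projT1 (projT2 t)) ∘ (projT2 (projT2 t) ∘ wb (projT1 t))))) as [Gh0 HGh].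
  { intros t. apply Hfu. }
  destruct (@choose C (fun X => Hom X (Go (F X))) (fun X u => htpy (Fh F u) (w (F X)))) as [eta Heta].
  { intros X. apply Hfu. }
  destruct (@choose C (fun X => Hom (Go (F X)) X) (fun X u => htpy (Fh F u) (wb (F X)))) as [eta' Heta'].
  { intros X. apply Hfu. }
  set (Gh := (fun Y Y' (g : Hom Y Y') => Gh0 (existT _ Y (existT _ Y' g))) : forall Y Y' : D, Hom Y Y' -> Hom (Go Y) (Go Y')).
  assert (HG : forall Y Y' (g : Hom Y Y'), htpy (Fh F (Gh Y Y' g)) (w Y' ∘ (g ∘ wb Y))).
  { intros Y Y' g. exact (HGh (existT _ Y (existT _ Y' g))). }
  clearbody Gh. clear HGh Gh0.
  exists Go, Gh, eta, eta', wb, w.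
  repeat split.
  - intros Y Y' g g' Hg. apply Hfa. rewrite !HG, Hg. reflexivity.
  - intros X Y Z g f. apply Hfa. rewrite F_comp, !HG. nrmg.
    rewrite (comp_assoc (f ∘ wb X) (w Y) (wb Y)), (proj1 (Hwb Y)), comp_id_l. reflexivity.
  - intros X. apply Hfa. rewrite HG, F_id, comp_id_l. apply (proj2 (Hwb X)).
  - intros X Y f. apply Hfa. rewrite !F_comp, HG, !Heta. nrmg.
    rewrite (proj1 (Hwb (F X))), comp_id_r. reflexivity.
  - intros X. apply Hfa. rewrite F_comp, Heta, Heta', F_id. apply (proj1 (Hwb (F X))).
  - intros X. apply Hfa. rewrite F_comp, Heta, Heta', F_id. apply (proj2 (Hwb (F X))).
  - intros X Y g. rewrite HG. nrmg. rewrite (comp_assoc (g ∘ wb X) (w Y) (wb Y)), (proj1 (Hwb Y)), comp_id_l.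
    reflexivity.
  - intros Y. apply (proj2 (Hwb Y)).
  - intros Y. apply (proj1 (Hwb Y)).
Qed.

End Equiv.



Lemma po_compare {C : Cat} {A B B' P P' : C} (i : Hom A B) (f : Hom A B')
  (p1 : Hom B P) (p2 : Hom B' P) (p1' : Hom B P') (p2' : Hom B' P') :
  is_pushout i f p1 p2 -> is_pushout i f p1' p2' ->
  exists phi : Hom P P', phi ∘ p1 = p1' /\ phi ∘ p2 = p2' /\ is_iso phi.
Proof.
  intros H H'.
  destruct (po_ind (h1 := p1') (h2 := p2') H (po_comm H')) as [phi [F1 F2]].
  destruct (po_ind (h1 := p1) (h2 := p2) H' (po_comm H)) as [psi [S1 S2]].
  exists phi. split; [auto|split; [auto|]]. exists psi. split.
  - apply (po_uniq H); nrmg; [rw F1; auto| rw F2; auto].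
  - apply (po_uniq H'); nrmg; [rw S1; auto| rw S2; auto].
Qed.

Lemma po_of_iso {C : Cat} {A B B' P P' : C} (i : Hom A B) (f : Hom A B')
  (p1 : Hom B P) (p2 : Hom B' P) (phi : Hom P P') :
  is_pushout i f p1 p2 -> is_iso phi -> is_pushout i f (phi ∘ p1) (phi ∘ p2).
Proof.
  intros H [psi [E1 E2]]. split.
  - nrmg. rewrite (po_comm H). reflexivity.
  - intros X h1 h2 E. destruct (po_ind H E) as [h [H1 H2]].
    exists (h ∘ psi). split.
    + split; nrmg; [rw E1; auto | rw E1; auto].
    + intros h' [K1 K2].
      assert (Hh : h' ∘ phi = h).
      { apply (po_uniq H); nrmg; [rewrite K1, H1 | rewrite K2, H2]; auto. }
      rewrite <- Hh. nrmg. rewrite E2. nrmg. reflexivity.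
Qed.

Section Slice.
Variable C : CylCat.
Variable A : C.

Definition str (X : uobj A) : Hom A (projT1 X) := proj1_sig (projT2 X).
Definition str_cof (X : uobj A) : cof (str X) := proj2_sig (projT2 X).
Definition mkob (B : C) (b : Hom A B) (H : cof b) : uobj A := existT _ B (exist _ b H).
Definition mkhom (X Y : uobj A) (u : Hom (projT1 X) (projT1 Y)) (E : u ∘ str X = str Y) : uhom X Y :=
  exist _ u E.
Definition hu {X Y : uobj A} (f : uhom X Y) : Hom (projT1 X) (projT1 Y) := proj1_sig f.
Definition hu_eq {X Y : uobj A} (f : uhom X Y) : hu f ∘ str X = str Y := proj2_sig f.

Lemma uhom_eq (X Y : uobj A) (f g : uhom X Y) : hu f = hu g -> f = g.
Proof.
  destruct f as [f Hf], g as [g Hg]. unfold hu; simpl. intros ->. f_equal. apply proof_irrelevance.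
Qed.

Lemma ucomp_assoc (W X Y Z : uobj A) (h : uhom W X) (g : uhom X Y) (f : uhom Y Z) :
  ucomp f (ucomp g h) = ucomp (ucomp f g) h.
Proof. apply uhom_eq. unfold hu; simpl. apply comp_assoc. Qed.
Lemma ucomp_id_l (X Y : uobj A) (f : uhom X Y) : ucomp (uid Y) f = f.
Proof. apply uhom_eq. unfold hu; simpl. apply comp_id_l. Qed.
Lemma ucomp_id_r (X Y : uobj A) (f : uhom X Y) : ucomp f (uid X) = f.
Proof. apply uhom_eq. unfold hu; simpl. apply comp_id_r. Qed.

Definition sliceCat : Cat :=
  {| Ob := uobj A; Hom := @uhom C A; comp := @ucomp C A; idm := @uid C A;
     comp_assoc := ucomp_assoc; comp_id_l := ucomp_id_l; comp_id_r := ucomp_id_r |}.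


Lemma sp1 (X1 XB XB' XP : uobj A) (i : uhom X1 XB) (f : uhom X1 XB') (p1 : uhom XB XP) (p2 : uhom XB' XP) :
  is_pushout (hu i) (hu f) (hu p1) (hu p2) -> @is_pushout sliceCat _ _ _ _ i f p1 p2.
Proof.
  intros H. split.
  - apply uhom_eq. exact (po_comm H).
  - intros Z h1 h2 E. apply (f_equal hu) in E. simpl in E.
    destruct H as [_ U]. destruct (U _ (hu h1) (hu h2) E) as [h [[H1 H2] Hu]].
    assert (Eh : h ∘ str XP = str Z).
    { rewrite <- (hu_eq p2). rw H2. apply hu_eq. }
    exists (@mkhom XP Z h Eh). split.
    + split; apply uhom_eq; simpl; auto.
    + intros h' [K1 K2]. apply uhom_eq. simpl. apply Hu.
      apply (f_equal hu) in K1, K2. simpl in K1, K2. auto.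
Qed.

Lemma slice_po_build (X1 XB XB' : uobj A) (i : uhom X1 XB) (f : uhom X1 XB') :
  cof (hu i) -> exists (XP : uobj A) (p1 : uhom XB XP) (p2 : uhom XB' XP),
    @is_pushout sliceCat _ _ _ _ i f p1 p2 /\ is_pushout (hu i) (hu f) (hu p1) (hu p2).
Proof.
  intros Hi. destruct (pushout_exists (hu f) Hi) as [P' [q1 [q2 Hq]]].
  set (XP := mkob (cof_comp (str_cof XB') (pushout_cof Hi Hq))).
  assert (E1 : q1 ∘ str XB = str XP).
  { unfold XP, mkob, str at 2; simpl. rewrite <- (hu_eq i), <- (hu_eq f). rw (po_comm Hq). reflexivity. }
  exists XP, (@mkhom XB XP q1 E1), (@mkhom XB' XP q2 eq_refl).
  split; [apply sp1|]; exact Hq.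
Qed.

Lemma sp2 (X1 XB XB' XP : uobj A) (i : uhom X1 XB) (f : uhom X1 XB') (p1 : uhom XB XP) (p2 : uhom XB' XP) :
  cof (hu i) -> @is_pushout sliceCat _ _ _ _ i f p1 p2 -> is_pushout (hu i) (hu f) (hu p1) (hu p2).
Proof.
  intros Hi H. destruct (slice_po_build f Hi) as [XP' [q1 [q2 [Hs Hq]]]].
  destruct (po_compare Hs H) as [phi [F1 [F2 [psi [I1 I2]]]]].
  apply (f_equal hu) in F1, F2, I1, I2. simpl in F1, F2, I1, I2.
  rewrite <- F1, <- F2. apply po_of_iso; auto. exists (hu psi). auto.
Qed.

Definition scof (X Y : sliceCat) (f : Hom X Y) : Prop := cof (hu f).
Definition swe (X Y : sliceCat) (f : Hom X Y) : Prop := we (hu f).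

Lemma s_iso (X Y : sliceCat) (f : Hom X Y) : is_iso f -> is_iso (hu f).
Proof.
  intros [g [E1 E2]]. apply (f_equal hu) in E1, E2. simpl in E1, E2. exists (hu g). auto.
Qed.

Lemma s_cof_iso (X Y : sliceCat) (f : Hom X Y) : is_iso f -> scof f.
Proof. intros H. apply cof_iso, s_iso, H. Qed.
Lemma s_we_iso (X Y : sliceCat) (f : Hom X Y) : is_iso f -> swe f.
Proof. intros H. apply we_iso, s_iso, H. Qed.
Lemma s_cof_comp (X Y Z : sliceCat) (g : Hom Y Z) (f : Hom X Y) : scof f -> scof g -> scof (comp g f).
Proof. intros. apply cof_comp; auto. Qed.
Lemma s_we_comp (X Y Z : sliceCat) (g : Hom Y Z) (f : Hom X Y) : swe f -> swe g -> swe (comp g f).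
Proof. intros. apply we_comp; auto. Qed.
Lemma s_2of6 (W X Y Z : sliceCat) (h : Hom W X) (g : Hom X Y) (f : Hom Y Z) :
  swe (comp f g) -> swe (comp g h) -> swe f /\ swe g /\ swe h /\ swe (comp f (comp g h)).
Proof. intros H1 H2. exact (we_2of6 H1 H2). Qed.

Definition s_zero : sliceCat := mkob (cof_id A).
Definition s_init (X : sliceCat) : Hom s_zero X := @mkhom s_zero X (str X) (comp_id_r _).
Lemma s_init_unique (X : sliceCat) (f : Hom s_zero X) : f = s_init X.
Proof. apply uhom_eq. simpl. rewrite <- (hu_eq f). simpl. rewrite comp_id_r. reflexivity. Qed.
Lemma s_init_cof (X : sliceCat) : scof (s_init X).
Proof. apply str_cof. Qed.
Lemma s_pushout_exists (A1 B B' : sliceCat) (i : Hom A1 B) (f : Hom A1 B') : scof i ->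
  exists (P : sliceCat) (p1 : Hom B P) (p2 : Hom B' P), is_pushout i f p1 p2.
Proof. intros Hi. destruct (slice_po_build f Hi) as [P [p1 [p2 [H _]]]]. exists P, p1, p2. exact H. Qed.
Lemma s_pushout_cof (A1 B B' P : sliceCat) (i : Hom A1 B) (f : Hom A1 B') (p1 : Hom B P) (p2 : Hom B' P) :
  scof i -> is_pushout i f p1 p2 -> scof p2.
Proof. intros Hi H. exact (pushout_cof Hi (sp2 Hi H)). Qed.
Lemma s_pushout_tcof (A1 B B' P : sliceCat) (i : Hom A1 B) (f : Hom A1 B') (p1 : Hom B P) (p2 : Hom B' P) :
  scof i -> swe i -> is_pushout i f p1 p2 -> scof p2 /\ swe p2.
Proof. intros Hi Wi H. exact (pushout_tcof Hi Wi (sp2 Hi H)). Qed.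
Lemma s_cylinder (X S : sliceCat) (i1 i2 : Hom X S) : is_pushout (s_init X) (s_init X) i1 i2 ->
  exists (I : sliceCat) (c : Hom S I) (p : Hom I X),
    scof c /\ swe p /\ comp p (comp c i1) = idm X /\ comp p (comp c i2) = idm X.
Proof.
  intros H. pose proof (sp2 (s_init_cof X) H) as Hc. simpl in Hc.
  destruct (po_ind (h1 := idm (projT1 X)) (h2 := idm (projT1 X)) Hc eq_refl) as [d [D1 D2]].
  destruct (factor d) as [I [c [p [Hcc [Wp Ed]]]]].
  set (XI := mkob (cof_comp (str_cof S) Hcc)).
  assert (Ep : p ∘ str XI = str X).
  { unfold XI, mkob, str at 1; simpl. rewrite <- (hu_eq i1). rw Ed. rw D1. reflexivity. }
  exists XI, (@mkhom S XI c eq_refl), (@mkhom XI X p Ep).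
  split; [exact Hcc|split; [exact Wp|split]]; apply uhom_eq; simpl.
  - rw Ed. exact D1.
  - rw Ed. exact D2.
Qed.
Lemma s_tcof_retract (A1 B : sliceCat) (j : Hom A1 B) : scof j -> swe j ->
  exists r : Hom B A1, comp r j = idm A1.
Proof.
  intros Hj Wj. destruct (tcof_retract Hj Wj) as [r Er].
  assert (E : r ∘ str B = str A1) by (rewrite <- (hu_eq j); rw Er; reflexivity).
  exists (@mkhom B A1 r E). apply uhom_eq. exact Er.
Qed.

Definition sliceCyl : CylCat :=
  {| ccat := sliceCat; cof := scof; we := swe; cof_iso := s_cof_iso; we_iso := s_we_iso;
     cof_comp := s_cof_comp; we_comp := s_we_comp; we_2of6 := s_2of6; zero := s_zero;
     init := s_init; init_unique := s_init_unique; init_cof := s_init_cof;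
     pushout_exists := s_pushout_exists; pushout_cof := s_pushout_cof;
     pushout_tcof := s_pushout_tcof; cylinder := s_cylinder; tcof_retract := s_tcof_retract |}.

End Slice.



Section Trans.
Variable C : CylCat.
Variable A : C.

Lemma RH1 (X1 XB XX : uobj A) (i : uhom X1 XB) (f g : uhom XB XX) : cof (hu i) ->
  @rel_htpy (sliceCyl A) _ _ _ i f g -> rel_htpy (hu i) (hu f) (hu g).
Proof.
  intros Hi [Q [q1 [q2 [I [c [p [H [Hq [Hc [Hp [E1 [E2 [Ef Eg]]]]]]]]]]]]].
  apply (f_equal (@hu _ _ _ _)) in E1, E2, Ef, Eg. simpl in E1, E2, Ef, Eg.
  exists (projT1 Q), (hu q1), (hu q2), (projT1 I), (hu c), (hu p), (hu H).
  pose proof (sp2 Hi Hq). repeat split; auto; apply H0.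
Qed.

Lemma RH2 (X1 XB XX : uobj A) (i : uhom X1 XB) (f g : uhom XB XX) : cof (hu i) ->
  rel_htpy (hu i) (hu f) (hu g) -> @rel_htpy (sliceCyl A) _ _ _ i f g.
Proof.
  intros Hi [Q [q1 [q2 [I [c [p [H [Hq [Hc [Hp [E1 [E2 [Ef Eg]]]]]]]]]]]]].
  set (Qs := mkob (cof_comp (str_cof XB) (po_cof1 Hi Hq))).
  assert (Eq2 : q2 ∘ str XB = str Qs).
  { change (str Qs) with (q1 ∘ str XB). rewrite <- (hu_eq i). rw (po_comm Hq). reflexivity. }
  set (Is := mkob (cof_comp (str_cof Qs) Hc)).
  assert (Ep : p ∘ str Is = str XB).
  { change (str Is) with (c ∘ (q1 ∘ str XB)). rw E1. reflexivity. }
  assert (EH : H ∘ str Is = str XX).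
  { change (str Is) with (c ∘ (q1 ∘ str XB)). rw Ef. apply hu_eq. }
  exists Qs, (@mkhom _ _ XB Qs q1 eq_refl), (@mkhom _ _ XB Qs q2 Eq2), Is, (@mkhom _ _ Qs Is c eq_refl),
    (@mkhom _ _ Is XB p Ep), (@mkhom _ _ Is XX H EH).
  split; [apply sp1; exact Hq|].
  split; [exact Hc|split; [exact Hp|]].
  repeat split; apply uhom_eq; simpl; auto.
Qed.

End Trans.

Section FAM.
Variables C D : CylCat.
Variable F : CylMor C D.
Variable A : C.

Lemma FA_comp (X Y Z : sliceCyl A) (g : Hom Y Z) (f : Hom X Y) :
  FA_hom F (comp g f) = @comp (sliceCyl (F A)) _ _ _ (FA_hom F g) (FA_hom F f).
Proof. apply uhom_eq. simpl. apply F_comp. Qed.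
Lemma FA_id (X : sliceCyl A) : FA_hom F (idm X) = @idm (sliceCyl (F A)) (FA_ob F X).
Proof. apply uhom_eq. simpl. apply F_id. Qed.
Lemma FA_cof (X Y : sliceCyl A) (f : Hom X Y) : cof f -> @cof (sliceCyl (F A)) _ _ (FA_hom F f).
Proof. intros H. exact (F_cof F H). Qed.
Lemma FA_we (X Y : sliceCyl A) (f : Hom X Y) : we f -> @we (sliceCyl (F A)) _ _ (FA_hom F f).
Proof. intros H. exact (F_we F H). Qed.
Lemma FA_init : @is_initial (sliceCyl (F A)) (FA_ob F (@zero (sliceCyl A))).
Proof.
  intros Y. assert (E : str Y ∘ Fh F (idm A) = str Y) by (rewrite F_id, comp_id_r; auto).
  exists (@mkhom _ _ (FA_ob F (@zero (sliceCyl A))) Y (str Y) E). split; auto.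
  intros f' _. apply uhom_eq. simpl. rewrite <- (hu_eq f'). exact (eq_trans (f_equal (comp (hu f')) (F_id F A)) (comp_id_r _)).
Qed.
Lemma FA_pushout (A1 B B' P : sliceCyl A) (i : Hom A1 B) (f : Hom A1 B') (p1 : Hom B P) (p2 : Hom B' P) :
  cof i -> is_pushout i f p1 p2 ->
  @is_pushout (sliceCyl (F A)) _ _ _ _ (FA_hom F i) (FA_hom F f) (FA_hom F p1) (FA_hom F p2).
Proof. intros Hi H. apply sp1. simpl. apply F_pushout; auto. exact (sp2 Hi H). Qed.

Definition FAmor : CylMor (sliceCyl A) (sliceCyl (F A)) :=
  @Build_CylMor (sliceCyl A) (sliceCyl (F A)) (@FA_ob C D F A) (fun X Y u => FA_hom F u)
    FA_comp FA_id FA_cof FA_we FA_init FA_pushout.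

End FAM.



Lemma abs12 (C D : CylCat) (F : CylMor C D) :
  acyclic F <-> (detects_we F /\ forall A : C, slice_homotopy_surjective F A).
Proof.
  split.
  - intros [Hs Hff]. pose proof (acyc_full Hff) as Hfu. pose proof (acyc_faith Hff) as Hfa.
    split; [apply sff_detects; auto | apply sf_slicehs; auto].
  - intros [Hd Hsl]. split; [apply two_hs; auto | apply two_hff; auto].
Qed.

Lemma abs13 (C D : CylCat) (F : CylMor C D) :
  acyclic F <-> @hequiv (hCat C) (hCat D) (Fo F) (hF F).
Proof.
  split.
  - intros [Hs Hff]. apply sff_hequiv; auto; [apply acyc_full | apply acyc_faith]; auto.
  - intros H. destruct (hequiv_sff H) as [Hs [Hfu Hfa]].
    apply abs12. split; [apply sff_detects; auto | apply sf_slicehs; auto].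
Qed.

Lemma hequiv_ext (o1 o2 : Type) (h1 : o1 -> o1 -> Type) (h2 : o2 -> o2 -> Type)
  (c1 : forall X Y Z, h1 Y Z -> h1 X Y -> h1 X Z) (c2 : forall X Y Z, h2 Y Z -> h2 X Y -> h2 X Z)
  (i1 : forall X, h1 X X) (i2 : forall X, h2 X X)
  (R1 R1' : forall X Y, h1 X Y -> h1 X Y -> Prop) (R2 R2' : forall X Y, h2 X Y -> h2 X Y -> Prop)
  (Fo : o1 -> o2) (Fh : forall X Y, h1 X Y -> h2 (Fo X) (Fo Y)) :
  (forall X Y f g, R1 X Y f g <-> R1' X Y f g) -> (forall X Y f g, R2 X Y f g <-> R2' X Y f g) ->
  @hequiv (Build_HPre c1 i1 R1) (Build_HPre c2 i2 R2) Fo Fh ->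
  @hequiv (Build_HPre c1 i1 R1') (Build_HPre c2 i2 R2') Fo Fh.
Proof.
  intros E1 E2 [Go [Gh [eta [eta' [eps [eps' [P1 [P2 [P3 [P4 [P5 [P6 [P7 [P8 P9]]]]]]]]]]]]]].
  exists Go, Gh, eta, eta', eps, eps'. simpl in *.
  repeat split; intros.
  - apply E1, P1, E2; auto.
  - apply E1, P2.
  - apply E1, P3.
  - apply E1, P4.
  - apply E1, P5.
  - apply E1, P6.
  - apply E2, P7.
  - apply E2, P8.
  - apply E2, P9.
Qed.

Lemma slice_heq (C : CylCat) (A : C) (X Y : uobj A) (f g : uhom X Y) :
  rel_htpy (str X) (hu f) (hu g) <-> @htpy (sliceCyl A) X Y f g.
Proof.
  split; intros H.
  - apply RH2; auto. apply str_cof.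
  - exact (RH1 (i := s_init X) (str_cof X) H).
Qed.

Section Fin.
Variables C D : CylCat.
Variable F : CylMor C D.

Lemma transfer (A : C) :
  @hequiv (hSlice A) (hSlice (F A)) (@FA_ob C D F A) (@hFA C D F A) <->
  @hequiv (hCat (sliceCyl A)) (hCat (sliceCyl (F A))) (Fo (FAmor F A)) (hF (FAmor F A)).
Proof.
  split; intros H.
  - exact (@hequiv_ext (uobj A) (uobj (F A)) uhom uhom (@ucomp C A) (@ucomp D (F A)) (@uid C A) (@uid D (F A))
      (fun X Y f g => rel_htpy (str X) (hu f) (hu g)) (fun X Y f g => @htpy (sliceCyl A) X Y f g)
      (fun X Y f g => rel_htpy (str X) (hu f) (hu g)) (fun X Y f g => @htpy (sliceCyl (F A)) X Y f g)
      (@FA_ob C D F A) (@hFA C D F A) (@slice_heq C A) (@slice_heq D (F A)) H).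
  - refine (@hequiv_ext (uobj A) (uobj (F A)) uhom uhom (@ucomp C A) (@ucomp D (F A)) (@uid C A) (@uid D (F A))
      (fun X Y f g => @htpy (sliceCyl A) X Y f g) (fun X Y f g => rel_htpy (str X) (hu f) (hu g))
      (fun X Y f g => @htpy (sliceCyl (F A)) X Y f g) (fun X Y f g => rel_htpy (str X) (hu f) (hu g))
      (@FA_ob C D F A) (@hFA C D F A) _ _ H).
    + intros. symmetry. apply (@slice_heq C A).
    + intros. symmetry. apply (@slice_heq D (F A)).
Qed.

End Fin.



Section Fin2.
Variables C D : CylCat.
Variable F : CylMor C D.

Lemma acyc_to_slice (A : C) : acyclic F -> acyclic (FAmor F A).
Proof.
  intros Hac. pose proof Hac as [Hs Hff].
  destruct (proj1 (abs12 F) Hac) as [Hd Hsl].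
  split.
  - intros Dd. destruct (Hsl A (projT1 Dd) (str Dd) (str_cof Dd)) as [B [i [Hi [w [Ww Ew]]]]].
    exists (mkob Hi). exists (@mkhom _ _ Dd (FA_ob F (mkob Hi)) w Ew). exact Ww.
  - intros A1 B X i x v Hi Ev.
    apply (f_equal (@hu _ _ _ _)) in Ev. simpl in Ev.
    destruct (Hff _ _ _ (hu i) (hu x) (hu v) Hi Ev) as [v0 [E0 R0]].
    assert (E1 : v0 ∘ str B = str X).
    { rewrite <- (hu_eq i). rw E0. apply hu_eq. }
    exists (@mkhom _ _ B X v0 E1). split.
    + apply uhom_eq. exact E0.
    + apply RH2; [exact (F_cof F Hi) | exact R0].
Qed.

Lemma slice0_to_acyc : acyclic (FAmor F zero) -> acyclic F.
Proof.
  intros [Hs Hff]. split.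
  - intros Dd. destruct (phi0 F) as [phi _].
    assert (Hphi : cof phi).
    { apply cof_iso. exists (init (F zero)). split; [apply Finit_eq|apply zero_eq]. }
    pose proof (cof_comp Hphi (init_cof Dd)) as Hj.
    destruct (Hs (mkob Hj)) as [Cc [w Ww]].
    exists (projT1 Cc), (hu w). exact Ww.
  - intros A1 B X i x v Hi Ev.
    set (obA := mkob (init_cof A1)). set (obB := mkob (init_cof B)). set (obX := mkob (init_cof X)).
    set (is := @mkhom _ _ obA obB i (zero_eq _ _)).
    set (xs := @mkhom _ _ obA obX x (zero_eq _ _)).
    set (vs := @mkhom _ _ (FA_ob F obB) (FA_ob F obX) v (Finit_eq _ _)).
    assert (Evs : @comp (sliceCyl (F zero)) _ _ _ vs (Fh (FAmor F zero) is) = Fh (FAmor F zero) xs).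
    { apply uhom_eq. exact Ev. }
    destruct (Hff obA obB obX is xs vs Hi Evs) as [v' [E' R']].
    exists (hu v'). split.
    + apply (f_equal (@hu _ _ _ _)) in E'. exact E'.
    + exact (@RH1 D (F zero) (FA_ob F obA) (FA_ob F obB) (FA_ob F obX) (FA_hom F is) (FA_hom F v') vs (F_cof F Hi) R').
Qed.

End Fin2.

Theorem mainTheorem3 (C D : CylCat) (F : CylMor C D) :
  (* (1) <-> (2) *)
  (acyclic F <-> (detects_we F /\ forall A : C, slice_homotopy_surjective F A)) /\
  (* (1) <-> (3) *)
  (acyclic F <-> @hequiv (hCat C) (hCat D) (Fo F) (hF F)) /\
  (* (1) <-> (4) *)
  (acyclic F <-> forall A : C, @hequiv (hSlice A) (hSlice (F A)) (@FA_ob C D F A) (@hFA C D F A)).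
Proof.
  split; [apply abs12|split; [apply abs13|]].
  split.
  - intros H A. apply transfer. apply abs13. apply acyc_to_slice; auto.
  - intros H. apply slice0_to_acyc. apply abs13. apply transfer. apply H.
Qed.
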